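(* Let $N\ge1$, $\beta$ a non-negative integer and $\gamma$ a constant. For every $j=1,\dots,N$, the operators $\tilde h^B_j$ and $(\tilde b^\dagger_j)^2$ map $\mathbb{C}[z_1^2,\dots,z_N^2]$ into itself.
   Context: Operators on functions of $z=(z_1,\dots,z_N)$: $s_{ij}$ swaps $z_i$ and $z_j$; $t_j$ replaces $z_j$ by $-z_j$. $D^B_j=\frac{\partial}{\partial z_j}+\beta\sum_{k\neq j}\left(\frac{1-s_{jk}}{z_j-z_k}+\frac{1-t_jt_ks_{jk}}{z_j+z_k}\right)+\gamma\frac{1-t_j}{z_j}$. Set $\tilde b^\dagger_j=\frac1{\sqrt2}\left(-D^B_j+2z_j\right)$ and $\tilde b_j=\frac1{\sqrt2}D^B_j$ (the conjugates of $\frac1{\sqrt2}(\mp D^B_j+z_j)$ by multiplication by $\prod_k e^{-z_k^2/2}$), and $\tilde h^B_j=\tilde b^\dagger_j\tilde b_j+\beta\sum_{k<j}\left(s_{jk}+t_jt_ks_{jk}\right)$. *)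

(* Defs.v *)
From HB Require Import structures.
From mathcomp Require Import all_boot all_order all_algebra.
From mathcomp Require Import mpoly.
From Stdlib Require Import ClassicalEpsilon.
Set Implicit Arguments. Unset Strict Implicit. Unset Printing Implicit Defensive.
Import Order.TTheory GRing.Theory Num.Theory.
Local Open Scope ring_scope.

Section Ops.
Variables (C : numClosedFieldType) (N : nat).
Local Notation P := {mpoly C[N]}.

Definition subst (f : 'I_N -> P) (p : P) : P := p \mPo [tuple f i | i < N].

Definition swp (j k : 'I_N) (p : P) : P := subst (fun i => if i == j then 'X_k else if i == k then 'X_j else 'X_i) p.

Definition tfl (j : 'I_N) (p : P) : P :=
  subst (fun i => if i == j then - 'X_i else 'X_i) p.

(* exact quotient q = p / d (a polynomial q with p = d * q; in all uses below
   such a q exists, since the divided differences of polynomials are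
   polynomials) *)
Definition divq (d p : P) : P := epsilon (inhabits 0) (fun q => p = d * q).

Definition DB (beta : nat) (gamma : C) (j : 'I_N) (p : P) : P :=
  mderiv j p
  + beta%:R *: (\sum_(k < N | k != j)
        (divq ('X_j - 'X_k) (p - swp j k p)
         + divq ('X_j + 'X_k) (p - tfl j (tfl k (swp j k p)))))
  + gamma *: divq 'X_j (p - tfl j p).

Definition bdag beta gamma (j : 'I_N) (p : P) : P :=
  (sqrtC 2)^-1 *: (- DB beta gamma j p + 2%:R *: ('X_j * p)).

Definition bann beta gamma (j : 'I_N) (p : P) : P :=
  (sqrtC 2)^-1 *: DB beta gamma j p.

Definition hB beta gamma (j : 'I_N) (p : P) : P :=
  bdag beta gamma j (bann beta gamma j p)
  + beta%:R *: (\sum_(k < N | (k < j)%N) (swp j k p + tfl j (tfl k (swp j k p)))).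

Definition in_even_poly (p : P) : Prop :=
  exists q : P, p = subst (fun i => 'X_i ^+ 2) q.

End Ops.

(* Main.v *)
Require Import Defs.
From HB Require Import structures.
From mathcomp Require Import all_boot all_order all_algebra.
From mathcomp Require Import mpoly.
From Stdlib Require Import ClassicalEpsilon.
From mathcomp Require Import ring.
Set Implicit Arguments. Unset Strict Implicit. Unset Printing Implicit Defensive.
Import Order.TTheory GRing.Theory Num.Theory.
Local Open Scope ring_scope.

Section S.
Variables (C : numClosedFieldType) (N : nat).
Local Notation P := {mpoly C[N]}.
Implicit Types (p q : P) (f g : 'I_N -> P).
Local Notation subst := (@subst C N).

Lemma substX (f : 'I_N -> P) i : subst f 'X_i = f i.
Proof. by rewrite /subst comp_mpolyXU -tnth_nth tnth_mktuple. Qed.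
Lemma substD f p q : subst f (p + q) = subst f p + subst f q.
Proof. by rewrite /subst comp_mpolyD. Qed.
Lemma substB f p q : subst f (p - q) = subst f p - subst f q.
Proof. by rewrite /subst comp_mpolyB. Qed.
Lemma substN f p : subst f (- p) = - subst f p.
Proof. by rewrite /subst comp_mpolyN. Qed.
Lemma substZ f c p : subst f (c *: p) = c *: subst f p.
Proof. by rewrite /subst comp_mpolyZ. Qed.
Lemma substM f p q : subst f (p * q) = subst f p * subst f q.
Proof. by rewrite /subst rmorphM. Qed.
Lemma subst1 f : subst f 1 = 1.
Proof. by rewrite /subst comp_mpoly1. Qed.
Lemma subst0 f : subst f 0 = 0.
Proof. by rewrite /subst comp_mpoly0. Qed.
Lemma substC f c : subst f c%:MP = c%:MP.
Proof. by rewrite /subst comp_mpolyC. Qed.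

Lemma morph_ext (F G : P -> P) :
  (forall p q, F (p + q) = F p + F q) -> (forall c p, F (c *: p) = c *: F p) ->
  F 1 = 1 -> (forall p q, F (p * q) = F p * F q) ->
  (forall p q, G (p + q) = G p + G q) -> (forall c p, G (c *: p) = c *: G p) ->
  G 1 = 1 -> (forall p q, G (p * q) = G p * G q) ->
  (forall i, F 'X_i = G 'X_i) -> forall p, F p = G p.
Proof.
move=> FD FZ F1 FM GD GZ G1 GM FGX.
have F0 : F 0 = 0 by have := FZ 0 0; rewrite !scale0r.
have G0 : G 0 = 0 by have := GZ 0 0; rewrite !scale0r.
have Fe : forall x k, F (x ^+ k) = F x ^+ k.
  by move=> x; elim=> [|k IH]; rewrite ?expr0 ?F1 // !exprS FM IH.
have Ge : forall x k, G (x ^+ k) = G x ^+ k.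
  by move=> x; elim=> [|k IH]; rewrite ?expr0 ?G1 // !exprS GM IH.
move=> p; elim/mpolyind: p => [|c m p _ _ IH]; first by rewrite F0 G0.
rewrite FD GD FZ GZ IH; congr (_ *: _ + _).
rewrite mpolyXE_id (big_morph F FM F1) (big_morph G GM G1).
by apply: eq_bigr => i _; rewrite Fe Ge FGX.
Qed.

Lemma subst_comp (f g : 'I_N -> P) p :
  subst f (subst g p) = subst (fun i => subst f (g i)) p.
Proof.
apply: (morph_ext (F := fun p => subst f (subst g p))) => //=.
- by move=> ??; rewrite !substD.
- by move=> ??; rewrite !substZ.
- by rewrite !subst1.
- by move=> ??; rewrite !substM.
- exact: substD.
- exact: substZ.
- exact: subst1.
- exact: substM.
- by move=> i; rewrite !substX.
Qed.


Lemma subst_ext f g p : (forall i, f i = g i) -> subst f p = subst g p.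
Proof.
move=> fg; rewrite /Defs.subst; congr comp_mpoly.
by apply: eq_from_tnth => i; rewrite !tnth_mktuple.
Qed.

Lemma mderivXU i l : mderiv l ('X_i : P) = (i == l)%:R.
Proof.
rewrite mderivX mnm1E; case: eqP => [->|_]; last by rewrite scale0r.
have -> : (U_(l) - U_(l))%MM = 0%MM by apply/mnmP => x; rewrite !mnmE subnn.
by rewrite mpolyX0 scale1r.
Qed.

Definition sq (i : 'I_N) : P := 'X_i ^+ 2.

Lemma chain j q : mderiv j (subst sq q) = 'X_j * subst sq (mderiv j q) *+ 2.
Proof.
pose Q q := mderiv j (subst sq q) = 'X_j * subst sq (mderiv j q) *+ 2.
have Q1 : Q 1 by rewrite /Q subst1 -mpolyC1 mderivC subst0 mulr0 mul0rn.
have QM : forall a b, Q a -> Q b -> Q (a * b).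
  move=> a b; rewrite /Q !mderivM !substD !substM !mderivM => -> ->.
  rewrite -!mulrnAr; ring.
have QX : forall i, Q 'X_i.
  move=> i; rewrite /Q !substX /sq expr2 mderivM mderivXU.
  case: eqP => [->|_]; rewrite ?substC ?subst0 ?mulr0 ?mul0r ?mul0rn ?addr0 //.
  by rewrite mpolyC1 /= !mulr1n mul1r mulr1 mulr2n.
have Qe : forall x k, Q x -> Q (x ^+ k).
  by move=> x; elim=> [|k IH] Qx; rewrite ?expr0 // exprS; apply: QM => //; apply: IH.
elim/mpolyind: q => [|c m p _ _ IH]; first by rewrite !(subst0, mderiv0, mulr0, mul0rn).
rewrite substD mderivD substZ mderivZ IH mderivD mderivZ substD substZ.
rewrite mulrDr mulrnDl; congr (_ + _).
have -> : 'X_[m] = \prod_(i < N) ('X_i : P) ^+ m i by rewrite mpolyXE_id.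
have : Q (\prod_(i < N) ('X_i : P) ^+ m i).
  by apply: (big_ind Q) => // i _; apply: Qe.
by rewrite /Q => ->; rewrite -scalerAr -scalerMnr.
Qed.

Lemma div_subst f (d : P) : (forall i, exists r, 'X_i - f i = d * r) ->
  forall q, exists r, q - subst f q = d * r.
Proof.
move=> hX.
pose Q q := exists r, q - subst f q = d * r.
have Q1 : Q 1 by exists 0; rewrite subst1 subrr mulr0.
have QM : forall a b, Q a -> Q b -> Q (a * b).
  move=> a b [ra ea] [rb eb]; exists (a * rb + ra * subst f b).
  rewrite substM mulrDr mulrA (mulrC d) -mulrA -eb mulrA -ea; ring.
have Qe : forall x k, Q x -> Q (x ^+ k).
  by move=> x; elim=> [|k IH] Qx; rewrite ?expr0 // exprS; apply: QM => //; apply: IH.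
move=> q; elim/mpolyind: q => [|c m p _ _ [r IH]]; first by exists 0; rewrite subst0 subr0 mulr0.
have : Q 'X_[m].
  rewrite mpolyXE_id; apply: (big_ind Q) => // i _; apply: Qe; rewrite /Q substX; exact: hX.
case=> r' e'; exists (c *: r' + r).
rewrite substD substZ mulrDr -IH -scalerAr -e' scalerBr; ring.
Qed.

Lemma divq_eq (d p q : P) : d != 0 -> p = d * q -> Defs.divq d p = q.
Proof.
move=> dnz e.
have h : p = d * Defs.divq d p.
  by rewrite /Defs.divq; apply: (epsilon_spec (inhabits 0) (fun q => p = d * q)); exists q.
by apply: (mulfI dnz); rewrite -h.
Qed.

Lemma Xcoef i l : ('X_i : P)@_U_(l) = (i == l)%:R.
Proof. exact: mcoeffXU. Qed.

Lemma XB_neq0 j k : k != j -> ('X_j - 'X_k : P) != 0.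
Proof.
move=> kj; apply/negP => /eqP /(congr1 (mcoeff U_(j))).
by rewrite mcoeffB !Xcoef eqxx (negbTE kj) mcoeff0 subr0 => /eqP; rewrite oner_eq0.
Qed.

Lemma XD_neq0 j k : k != j -> ('X_j + 'X_k : P) != 0.
Proof.
move=> kj; apply/negP => /eqP /(congr1 (mcoeff U_(j))).
by rewrite mcoeffD !Xcoef eqxx (negbTE kj) mcoeff0 addr0 => /eqP; rewrite oner_eq0.
Qed.

Lemma X_neq0 j : ('X_j : P) != 0.
Proof.
apply/negP => /eqP /(congr1 (mcoeff U_(j))).
by rewrite !Xcoef eqxx mcoeff0 => /eqP; rewrite oner_eq0.
Qed.

Lemma substMn f p n : subst f (p *+ n) = subst f p *+ n.
Proof. by rewrite /Defs.subst comp_mpolyMn. Qed.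

Lemma substX2 f i : subst f ('X_i ^+ 2) = f i ^+ 2.
Proof. by rewrite !expr2 substM substX. Qed.

Lemma swpX j k i : swp j k ('X_i : P) =
  if i == j then 'X_k else if i == k then 'X_j else 'X_i.
Proof. by rewrite /swp substX. Qed.

Lemma tflX j i : tfl j ('X_i : P) = if i == j then - 'X_i else 'X_i.
Proof. by rewrite /tfl substX. Qed.

Lemma swp_sq j k q : swp j k (subst sq q) = subst sq (swp j k q).
Proof.
rewrite /swp !subst_comp; apply: subst_ext => i.
rewrite /sq substX2; case: ifP => _; first by rewrite substX.
by case: ifP => _; rewrite substX.
Qed.

Lemma tfl_sq l q : tfl l (subst sq q) = subst sq q.
Proof.
rewrite /tfl subst_comp; apply: subst_ext => i.
by rewrite /sq substX2; case: ifP => _; rewrite ?sqrrN.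
Qed.

Lemma substsqX i : subst sq 'X_i = 'X_i ^+ 2.
Proof. exact: substX. Qed.
Lemma tflN l p : tfl l (- p) = - tfl l p.
Proof. exact: substN. Qed.

Lemma swpM j k p q : swp j k (p * q) = swp j k p * swp j k q.
Proof. exact: substM. Qed.
Lemma tflM l p q : tfl l (p * q) = tfl l p * tfl l q.
Proof. exact: substM. Qed.

Lemma swp_div j k q : exists r, q - swp j k q = ('X_j - 'X_k) * r.
Proof.
apply: div_subst => i.
case: eqP => [->|_]; first by exists 1; rewrite mulr1.
case: eqP => [->|_]; first by exists (-1); rewrite mulrN1 opprB.
by exists 0; rewrite subrr mulr0.
Qed.

Definition Ev p := exists q, p = subst sq q.
Definition Od j p := exists q, p = 'X_j * subst sq q.

Lemma Ev0 : Ev 0. Proof. by exists 0; rewrite subst0. Qed.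
Lemma EvD p q : Ev p -> Ev q -> Ev (p + q).
Proof. by move=> [a ->] [b ->]; exists (a + b); rewrite substD. Qed.
Lemma EvZ c p : Ev p -> Ev (c *: p).
Proof. by move=> [a ->]; exists (c *: a); rewrite substZ. Qed.
Lemma EvN p : Ev p -> Ev (- p).
Proof. by move=> [a ->]; exists (- a); rewrite substN. Qed.
Lemma XOd j p : Od j p -> Ev ('X_j * p).
Proof. by move=> [a ->]; exists ('X_j * a); rewrite substM substsqX mulrA expr2. Qed.

Lemma Od0 j : Od j 0. Proof. by exists 0; rewrite subst0 mulr0. Qed.
Lemma OdD j p q : Od j p -> Od j q -> Od j (p + q).
Proof. by move=> [a ->] [b ->]; exists (a + b); rewrite substD mulrDr. Qed.
Lemma OdZ j c p : Od j p -> Od j (c *: p).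
Proof. by move=> [a ->]; exists (c *: a); rewrite substZ scalerAr. Qed.
Lemma OdN j p : Od j p -> Od j (- p).
Proof. by move=> [a ->]; exists (- a); rewrite substN mulrN. Qed.
Lemma XEv j p : Ev p -> Od j ('X_j * p).
Proof. by move=> [a ->]; exists a. Qed.

Lemma DB_ev beta gamma j p : Ev p -> Od j (DB beta gamma j p).
Proof.
case=> q ->; rewrite /DB.
apply: OdD; first apply: OdD.
- by exists (mderiv j q *+ 2); rewrite chain substMn mulrnAr.
- apply: OdZ; apply: (big_ind (Od j)); [exact: Od0| exact: OdD|] => k kj.
  have [r er] := swp_div j k q.
  rewrite swp_sq !tfl_sq.
  have e1 : subst sq q - subst sq (swp j k q) =
      ('X_j - 'X_k) * (('X_j + 'X_k) * subst sq r).
    by rewrite -substB er substM substB !substsqX; ring.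
  have e2 : subst sq q - subst sq (swp j k q) =
      ('X_j + 'X_k) * (('X_j - 'X_k) * subst sq r).
    by rewrite e1; ring.
  rewrite (divq_eq (XB_neq0 kj) e1) (divq_eq (XD_neq0 kj) e2).
  by exists (r *+ 2); rewrite substMn; ring.
- apply: OdZ; rewrite tfl_sq subrr (@divq_eq _ _ 0 (X_neq0 j)) ?mulr0 //.
  exact: Od0.
Qed.

Lemma DB_od beta gamma j p : Od j p -> Ev (DB beta gamma j p).
Proof.
case=> g ->; rewrite /DB.
set G := subst sq g.
apply: EvD; first apply: EvD.
- exists (g + 'X_j * mderiv j g *+ 2).
  rewrite mderivM mderivXU eqxx chain substD substMn substM substsqX /G /= mul1r; ring.
- apply: EvZ; apply: (big_ind Ev); [exact: Ev0| exact: EvD|] => k kj.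
  have [u eu] := swp_div j k g.
  have [v ev] := swp_div j k ('X_j * g).
  set S := subst sq (swp j k g).
  have hs : swp j k ('X_j * G) = 'X_k * S.
    by rewrite swpM swp_sq swpX eqxx.
  have ht : tfl j (tfl k ('X_k * S)) = - ('X_k * S).
    by rewrite !tflM !tfl_sq tflX eqxx tflN tflX (negbTE kj) mulNr.
  rewrite hs ht.
  have hU : G - S = ('X_j ^+ 2 - 'X_k ^+ 2) * subst sq u.
    by rewrite /G /S -substB eu substM substB !substsqX.
  have hV : 'X_j ^+ 2 * G - 'X_k ^+ 2 * S = ('X_j ^+ 2 - 'X_k ^+ 2) * subst sq v.
    have := congr1 (subst sq) ev.
    by rewrite substB swpM swpX eqxx !substM substB !substsqX.
  have e1 : 'X_j * G - 'X_k * S =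
      ('X_j - 'X_k) * (subst sq v + 'X_j * 'X_k * subst sq u).
    apply: (mulfI (XD_neq0 kj)).
    transitivity (('X_j ^+ 2 * G - 'X_k ^+ 2 * S) + 'X_j * 'X_k * (G - S)); first ring.
    by rewrite hU hV; ring.
  have e2 : 'X_j * G - - ('X_k * S) =
      ('X_j + 'X_k) * (subst sq v - 'X_j * 'X_k * subst sq u).
    apply: (mulfI (XB_neq0 kj)).
    transitivity (('X_j ^+ 2 * G - 'X_k ^+ 2 * S) - 'X_j * 'X_k * (G - S)); first ring.
    by rewrite hU hV; ring.
  rewrite (divq_eq (XB_neq0 kj) e1) (divq_eq (XD_neq0 kj) e2).
  by exists (v *+ 2); rewrite substMn; ring.
- apply: EvZ.
  have e : 'X_j * G - tfl j ('X_j * G) = 'X_j * (G *+ 2).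
    by rewrite tflM tfl_sq tflX eqxx; ring.
  rewrite (divq_eq (X_neq0 j) e).
  by exists (g *+ 2); rewrite substMn.
Qed.

Lemma bann_ev beta gamma j p : Ev p -> Od j (bann beta gamma j p).
Proof. by move=> h; apply: OdZ; apply: DB_ev. Qed.

Lemma bdag_ev beta gamma j p : Ev p -> Od j (bdag beta gamma j p).
Proof.
move=> h; apply: OdZ; apply: OdD; first by apply: OdN; apply: DB_ev.
by apply: OdZ; apply: XEv.
Qed.

Lemma bdag_od beta gamma j p : Od j p -> Ev (bdag beta gamma j p).
Proof.
move=> h; apply: EvZ; apply: EvD; first by apply: EvN; apply: DB_od.
by apply: EvZ; apply: XOd.
Qed.

Lemma swp_ev j k p : Ev p -> Ev (swp j k p).
Proof. by move=> [q ->]; exists (swp j k q); rewrite swp_sq. Qed.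

Lemma hB_ev beta gamma j p : Ev p -> Ev (hB beta gamma j p).
Proof.
move=> h; rewrite /hB; apply: EvD; first by apply: bdag_od; apply: bann_ev.
apply: EvZ; apply: (big_ind Ev); [exact: Ev0 | exact: EvD |] => k _.
have [q eq] := swp_ev j k h.
by rewrite eq !tfl_sq; apply: EvD; exists q.
Qed.

End S.
Unset Implicit Arguments.

Theorem lemma2p8 (C : numClosedFieldType) (N : nat) (hN : (1 <= N)%N)
  (beta : nat) (gamma : C) (j : 'I_N) (p : {mpoly C[N]}) :
  in_even_poly p ->
  in_even_poly (hB beta gamma j p) /\
  in_even_poly (bdag beta gamma j (bdag beta gamma j p)).
Proof.
move=> h; split.
- exact: (hB_ev beta gamma j h).
- by apply: bdag_od; apply: bdag_ev.
Qed.
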